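(* Let $M$ be a set of machines, $c\ge1$ a constant, $J$ a set of jobs with $|J|\le|M|^c$, and $L,l$ integers with $2|M|^c\ge L$ and $l\ge150c\ln|M|/\ln\ln|M|$. Then for every $s$, the number of bad patterns (for $M,L,l,J$) of size $s=\sum_{T,m}|B_{T,m}|$ is at most $2\exp\!\left(\frac{|J|\ln l}{8}\right)\left(\frac{eC(J)}{l}\right)^s$.
   Context: Jobs: each job $j$ has a machine sequence $\mathrm{seq}(j)\in M^*$ and a unique identifier. Standing assumption: $|M|\ge32$. $C(J)=\max_{m\in M}\sum_{j\in J}|\{i:\mathrm{seq}(j)_i=m\}|$. A bad pattern (for $M,L,l,J$) is a collection of sets $B_{T,m}$, for $0\le T<2L$ and $m\in M$, of (job, sequence position) pairs $(j,i)$, $j\in J$, such that $\mathrm{seq}(j)_i=m$ for all $(j,i)\in B_{T,m}$; each $j\in J$ appears at most once in $\bigsqcup B_{T,m}$; $|B_{T,m}|\in\{0\}\cup(l,|J|]$ for all $(T,m)$; and $\sum_{T,m}|B_{T,m}|>|J|/2$. *)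

(* Defs.v *)
From mathcomp Require Import all_boot all_order all_algebra.
From mathcomp Require Import reals exp sequences.
Set Implicit Arguments. Unset Strict Implicit. Unset Printing Implicit Defensive.
Import Order.TTheory GRing.Theory Num.Theory.

(* Sequence positions are natural numbers, taken
   in the finite range 'I_(maxlen sq) (every position i with i < size (sq j)
   lies there). *)
Section Jobs.
Variables (M J : finType) (sq : J -> seq M).

Definition maxlen : nat := \max_(j : J) size (sq j).

Definition CJ : nat := \max_(m : M) \sum_(j : J) count_mem m (sq j).

Definition pos := (J * 'I_maxlen)%type.

Definition pattern (L : nat) := {ffun 'I_(2 * L) * M -> {set pos}}.

Definition pattern_size L (B : pattern L) : nat := \sum_(Tm : 'I_(2 * L) * M) #|B Tm|.

Definition is_bad_pattern (L l : nat) (B : pattern L) : bool :=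
  [&&
      [forall Tm : 'I_(2 * L) * M, forall p : pos, (p \in B Tm) ==>
          ((p.2 : nat) < size (sq p.1)) && (nth Tm.2 (sq p.1) p.2 == Tm.2)],
      [forall j : J, \sum_(Tm : 'I_(2 * L) * M) #|[set p in B Tm | p.1 == j]| <= 1],
      [forall Tm : 'I_(2 * L) * M, (#|B Tm| == 0) || (l < #|B Tm| <= #|J|)]
    &
      #|J| < 2 * pattern_size B].

Definition num_bad_patterns (L l s : nat) : nat :=
  #|[set B : pattern L | is_bad_pattern l B && (pattern_size B == s)]|.
End Jobs.

(* Main.v *)
Require Import Defs.
From mathcomp Require Import all_boot all_order all_algebra.
From mathcomp Require Import reals exp sequences.
From mathcomp Require Import ring lra.
Import Order.TTheory GRing.Theory Num.Theory.
Set Implicit Arguments. Unset Strict Implicit. Unset Printing Implicit Defensive.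

Section Aux2.
Local Open Scope ring_scope.
Lemma expR_half (R : realType) : expR (1/2 : R) <= 2.
Proof.
have := expR_ge1Dx (- (1/2 : R)); rewrite expRN => h.
have u0 := expR_gt0 (1/2 : R).
have uv : expR (1/2 : R) * (expR (1/2))^-1 = 1 by rewrite mulfV // lt0r_neq0.
move: h uv u0; set u := expR (1/2 : R); set v := u^-1 => h uv u0.
have : 0 <= u * (v - 1/2) by apply: mulr_ge0; lra.
nra.
Qed.

Lemma expR1_le4 (R : realType) : expR (1 : R) <= 4.
Proof.
have -> : (1 : R) = 1/2 + 1/2 by lra.
rewrite expRD; have := expR_half R; have := expR_gt0 (1/2 : R).
set u := expR (1/2 : R) => h0 h1.
have : 0 <= u * (2 - u) by apply: mulr_ge0; lra.
nra.
Qed.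

Lemma expR1_ge2 (R : realType) : (2 : R) <= expR 1.
Proof. have := expR_ge1Dx (1 : R); lra. Qed.

Lemma analytic (R : realType) (Mr c lr : R) : 32 <= Mr -> 1 <= c ->
  150 * c * ln Mr / ln (ln Mr) <= lr ->
  [/\ 256 <= lr, 2 * expR (- (ln lr / 8)) <= 1 &
      4 * expR (c * ln Mr) * Mr * expR (lr * (- (ln lr / 8))) <= 1/2].
Proof.
move=> hM hc hl.
have he4 := expR1_le4 R; have he2 := expR1_ge2 R.
have Mpos : 0 < Mr by lra.
set A := ln Mr.
have hA1 : 1 < A.
  rewrite -[1]expRK /A ltr_ln ?posrE ?expR_gt0 //; lra.
have Apos : 0 < A by lra.
set y := ln A.
have ypos : 0 < y by apply: ln_gt0.
have hAy : A = expR y by rewrite /y lnK // posrE.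
have hMA : Mr = expR A by rewrite /A lnK // posrE.
have hA2y : 2 * y <= A.
  have h1 := expR_ge1Dx (y - 1).
  have h2 : A = expR 1 * expR (y - 1) by rewrite -expRD hAy; congr expR; lra.
  have h3 := expR_gt0 (y - 1).
  have : 0 <= (expR 1 - 2) * expR (y - 1) by apply: mulr_ge0; lra.
  lra.
set E2 := expR (y / 2).
have hE2 : A = E2 * E2 by rewrite -expRD hAy; congr expR; lra.
have hE2b : 1 + y / 2 <= E2 := expR_ge1Dx _.
have E2pos : 0 < E2 := expR_gt0 _.
set Q := A / y.
have hQy : Q * y = A by rewrite /Q mulfVK // lt0r_neq0.
have Qpos : 0 < Q by rewrite /Q divr_gt0.
have hl' : 150 * c * Q <= lr by move: hl; rewrite -mulrA.
have hQ2 : 2 <= Q by nra.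
have hQE : E2 / 2 <= Q.
  have : 0 <= E2 * (E2 - y / 2) by apply: mulr_ge0; lra.
  nra.
have hcQ : Q <= c * Q by nra.
have hlr300 : 300 <= lr by nra.
have hlrE : E2 <= lr by nra.
have lrpos : 0 < lr by lra.
have hlnl : y / 2 <= ln lr.
  by rewrite -[y / 2]expRK ler_ln ?posrE.
have hlnl2 : 75 * c * A <= lr * ln lr.
  have : 0 <= (lr - 150 * c * Q) * ln lr by apply: mulr_ge0; lra.
  have : 0 <= (150 * c * Q) * (ln lr - y / 2) by apply: mulr_ge0; nra.
  have -> : 75 * c * A = 150 * c * Q * (y / 2) by rewrite -hQy; field.
  nra.
have hln2 : 8 * ln 2 <= ln lr.
  have h256 : (2 : R) ^+ 8 <= lr by rewrite (_ : (2 : R) ^+ 8 = 256); [lra| rewrite !exprS expr0; lra].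
  have h2 : (0 : R) < 2 by lra.
  move: h256; rewrite -ler_ln ?posrE ?exprn_gt0 // (lnXn 8 h2) mulr_natl.
  by [].
split; first lra.
- rewrite expRN.
  have h1 : 2 <= expR (ln lr / 8).
    by rewrite -[X in X <= _](@lnK _ 2) ?posrE // ler_expR; lra.
  move: h1; have := expR_gt0 (ln lr / 8); set z := expR (ln lr / 8) => z0 h1.
  have zi : z^-1 * z = 1 by rewrite mulVf // lt0r_neq0.
  have : 0 <= z^-1 * (z - 2) by apply: mulr_ge0; [rewrite invr_ge0; lra | lra].
  nra.
rewrite hMA -!mulrA -!expRD.
have hexp : c * A + (A + lr * - (ln lr / 8)) <= -3.
  have : A <= c * A by nra.
  nra.
have h3 : expR (c * A + (A + lr * - (ln lr / 8))) <= expR (-3) by rewrite ler_expR.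
have h8 : 8 <= expR (3 : R).
  rewrite -[3]mulr1 (expRM_natl 3 (1 : R)).
  move: (expR1_ge2 R); have := expR_gt0 (1 : R); set u := expR (1 : R) => u0 hu2.
  have hu : 4 <= u * u by nra.
  have : 0 <= (u * u - 4) * u by apply: mulr_ge0; lra.
  rewrite !exprS expr0 mulr1. nra.
have h9 : expR (- 3 : R) <= 1 / 8.
  rewrite expRN; move: h8; have := expR_gt0 (3 : R); set z := expR (3 : R) => z0 h8.
  have zi : z^-1 * z = 1 by rewrite mulVf // lt0r_neq0.
  have : 0 <= z^-1 * (z - 8) by apply: mulr_ge0; [rewrite invr_ge0; lra | lra].
  nra.
lra.
Qed.

End Aux2.

Section Aux.
Local Open Scope ring_scope.


Lemma ffact_le_exp n C b : (n <= C)%N -> (n ^_ b <= C ^ b)%N.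
Proof.
move=> hn; rewrite ffact_prod.
have -> : (C ^ b = \prod_(i < b) C)%N by rewrite prod_nat_const card_ord.
by apply: leq_prod => i _; apply: leq_trans (leq_subr _ _) hn.
Qed.

Lemma pow_fact (R : realType) (b : nat) : (b%:R : R) ^+ b <= expR 1 ^+ b * b`!%:R.
Proof.
case: b => [|b]; first by rewrite !expr0 fact0 mul1r.
have := @expR_ge1Dxn R b.+1%:R b (ler0n _ _).
rewrite -[X in expR X]mulr1 expRM_natl => h.
have hf : (0 : R) < b.+1`!%:R by rewrite ltr0n fact_gt0.
rewrite -ler_pdivrMr //.
apply: le_trans h; lra.
Qed.

Lemma binom_bound (R : realType) n C b l (x t : R) :
  (n <= C)%N -> (0 < C)%N -> (l <= b)%N -> 0 <= t ->
  x = l%:R * t / (expR 1 * C%:R) -> 'C(n, b)%:R * x ^+ b <= t ^+ b.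
Proof.
move=> hn hC hl ht ->.
have hf : (0 : R) < b`!%:R by rewrite ltr0n fact_gt0.
have hC' : (0 : R) < C%:R by rewrite ltr0n.
have he : (0 : R) < expR 1 by apply: expR_gt0.
have h1 : ('C(n, b)%:R : R) <= C%:R ^+ b / b`!%:R.
  rewrite ler_pdivlMr // -natrM -natrX bin_ffact ler_nat; exact: ffact_le_exp.
have h2 : (l%:R / expR 1 : R) ^+ b <= b`!%:R.
  rewrite expr_div_n ler_pdivrMr ?exprn_gt0 // mulrC.
  apply: le_trans (pow_fact R b); apply: lerXn2r; rewrite ?nnegrE ?ler0n ?ler_nat //.
have h3 : 0 <= (l%:R * t / (expR 1 * C%:R)) ^+ b.
  by apply: exprn_ge0; apply: divr_ge0; [apply: mulr_ge0 => //; apply: ler0n | apply: mulr_ge0; [apply: ltW|apply: ler0n]].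
apply: le_trans (ler_wpM2r h3 h1) _.
have -> : C%:R ^+ b / b`!%:R * (l%:R * t / (expR 1 * C%:R)) ^+ b =
          (l%:R / expR 1) ^+ b / b`!%:R * t ^+ b.
  have E : l%:R * t / (expR 1 * C%:R) = (l%:R / expR 1) * t / C%:R.
    by field; rewrite (lt0r_neq0 he) (lt0r_neq0 hC').
  rewrite E !exprMn !exprVn.
  have hCb : (C%:R : R) ^+ b != 0 by rewrite expf_neq0 // lt0r_neq0.
  move: hCb (lt0r_neq0 hf); set u := (C%:R : R) ^+ b; set v := (b`!%:R : R).
  have : expR 1 ^+ b != 0 :> R by rewrite expf_neq0 // lt0r_neq0.
  set ee := expR 1 ^+ b; set lb := (l%:R : R) ^+ b; set tb := t ^+ b.
  by move=> he' hu hv; field; rewrite hu hv he'.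
rewrite -[X in _ <= X]mul1r; apply: ler_wpM2r; first exact: exprn_ge0.
by rewrite ler_pdivrMr // mul1r.
Qed.

Lemma geom (R : realType) (t : R) l N : 0 <= t -> 2 * t <= 1 ->
  \sum_(b < N) (l < b)%N%:R * t ^+ b <= t ^+ l.
Proof.
move=> t0 t1.
suff : \sum_(b < N) (l < b)%N%:R * t ^+ b + 2 * t ^+ (maxn N l.+1) <= 2 * t ^+ l.+1.
  have := exprn_ge0 (maxn N l.+1) t0; have := exprn_ge0 l t0.
  rewrite exprS => h1 h2 h3.
  have h4 : 0 <= (1 - 2 * t) * t ^+ l by apply: mulr_ge0; lra.
  lra.
elim: N => [|N IH]; first by rewrite big_ord0 add0r max0n.
rewrite big_ord_recr /=.
case: (ltnP l N) => hlN.
  move: IH; rewrite (maxn_idPl hlN) (maxn_idPl (ltnW hlN : (l.+1 <= N.+1)%N)).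
  rewrite (exprS t N) mul1r.
  have h1 := exprn_ge0 N t0.
  have h4 : 0 <= (1 - 2 * t) * t ^+ N by apply: mulr_ge0; lra.
  lra.
move: IH; rewrite (maxn_idPr (leq_trans hlN (leqnSn l))) (maxn_idPr (hlN : (N.+1 <= l.+1)%N)).
by rewrite mul0r addr0.
Qed.

End Aux.

Section Comb.
Variables (M J : finType) (sq : J -> seq M).

Definition Pm (m : M) : {set pos sq} :=
  [set p : pos sq | ((p.2 : nat) < size (sq p.1)) && (nth m (sq p.1) p.2 == m)].

Lemma count_ord (s : seq M) m n : (size s <= n)%N ->
  \sum_(i < n) (((i : nat) < size s) && (nth m s i == m)) = count_mem m s.
Proof.
move=> hs.
rewrite -(big_mkord xpredT (fun i => ((i < size s) && (nth m s i == m)) : nat)).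
rewrite -(subnKC hs) (@big_cat_nat _ _ _ (size s) 0 _ _ _ (leq0n _) (leq_addr _ _)) /=.
rewrite [X in (_ + X)%N]big_nat_cond [X in (_ + X)%N]big1 ?addn0; last first.
  by move=> i /andP[/andP[hi _] _]; rewrite ltnNge hi.
rewrite -sum1_count (big_nth m) [RHS]big_mkcond /=.
by apply: eq_big_nat => i /andP[_ ->] /=; case: (_ == _).
Qed.

Lemma cardPm m : (#|Pm m| <= CJ sq)%N.
Proof.
rewrite /CJ; apply: leq_trans (leq_bigmax m).
rewrite -sum1_card big_mkcond /=.
rewrite (eq_bigr (fun p : pos sq => (fun j (i : 'I_(maxlen sq)) => if (j, i) \in Pm m then 1 else 0)%N p.1 p.2)); last by case.
rewrite -(pair_bigA _ (fun j (i : 'I_(maxlen sq)) => if (j, i) \in Pm m then 1 else 0)%N) /=.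
apply: leq_sum => j _.
rewrite -(@count_ord (sq j) m (maxlen sq)); last first.
  exact: (leq_bigmax j).
by apply: eq_leq; apply: eq_bigr => i _; rewrite inE /=; case: ifP.
Qed.


Definition adm (l : nat) (m : M) (A : {set pos sq}) : bool :=
  (A \subset Pm m) && ((#|A| == 0) || (l < #|A|)).

Lemma bad_adm L l (B : pattern sq L) : is_bad_pattern l B -> forall k, adm l k.2 (B k).
Proof.
case/and4P => h1 _ h3 _ k; apply/andP; split.
  apply/subsetP => p pB.
  by move/forallP: h1 => /(_ k)/forallP/(_ p)/implyP/(_ pB); rewrite inE.
by move/forallP: h3 => /(_ k)/orP [->|/andP[-> _]]; rewrite ?orbT.
Qed.

Lemma bad_size L l (B : pattern sq L) : is_bad_pattern l B -> (pattern_size B <= #|J|)%N.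
Proof.
case/and4P => _ /forallP h2 _ _.
have E (A : {set pos sq}) : #|A| = (\sum_j #|[set p in A | p.1 == j]|)%N.
  rewrite -sum1_card (partition_big (fun p : pos sq => p.1) xpredT) //=.
  by apply: eq_bigr => j _; rewrite -sum1_card; apply: eq_bigl => p; rewrite inE.
rewrite /pattern_size (eq_bigr _ (fun k _ => E (B k))) exchange_big /=.
rewrite -sum1_card; apply: leq_sum => j _; exact: h2.
Qed.


Local Open Scope ring_scope.
Lemma key1 (R : realType) L l s (x : R) : 0 <= x ->
  (num_bad_patterns sq L l s)%:R * x ^+ s <=
  \prod_(k : 'I_(2*L) * M) \sum_(A : {set pos sq}) (adm l k.2 A)%:R * x ^+ #|A|.
Proof.
move=> x0; rewrite bigA_distr_bigA /=.
rewrite /num_bad_patterns mulrC mulr_natr -sumr_const [X in X <= _]big_mkcond /=.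
apply: ler_sum => B _; case: ifP => [|_]; last first.
  by apply: prodr_ge0 => k _; apply: mulr_ge0; rewrite ?ler0n ?exprn_ge0.
rewrite inE => /andP[hb /eqP hs].
rewrite (eq_bigr (fun k => x ^+ #|B k|)); last by move=> k _; rewrite bad_adm // mul1r.
by rewrite prodrXr -hs.
Qed.


Lemma key2 (R : realType) l m (x : R) :
  \sum_(A : {set pos sq}) (adm l m A)%:R * x ^+ #|A| =
  1 + \sum_(b < #|{: pos sq}|.+1) (l < b)%N%:R * ('C(#|Pm m|, b)%:R * x ^+ b).
Proof.
have E A : (adm l m A)%:R * x ^+ #|A| = (A == set0)%:R * x ^+ #|A| +
     ((A \subset Pm m) && (l < #|A|)%N)%:R * x ^+ #|A|.
  rewrite /adm; case: (A =P set0) => [->|/eqP h].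
    by rewrite sub0set cards0 /= mul0r addr0.
  have : #|A| != 0%N by rewrite cards_eq0.
  by move/negbTE => ->; rewrite /= mul0r add0r.
rewrite (eq_bigr _ (fun A _ => E A)) big_split /=; congr (_ + _).
  rewrite (bigD1 set0) //= eqxx cards0 mulr1 big1 ?addr0 // => A /negbTE ->.
  by rewrite mul0r.
have F (A : {set pos sq}) : ((A \subset Pm m) && (l < #|A|)%N)%:R * x ^+ #|A| =
   \sum_(b < #|{: pos sq}|.+1) ((A \subset Pm m) && (#|A| == b :> nat))%:R * ((l < b)%N%:R * x ^+ b).
  have hA : (#|A| < #|{: pos sq}|.+1)%N by rewrite ltnS max_card.
  rewrite (bigD1 (Ordinal hA)) //= eqxx andbT big1 ?addr0.
    by case: (_ \subset _); case: (l < _)%N; rewrite ?mul1r ?mul0r.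
  move=> b hb; rewrite (_ : (#|A| == b :> nat) = false) ?andbF ?mul0r //.
  apply/negbTE; apply: contra hb => /eqP h; apply/eqP/val_inj; exact: esym h.
rewrite (eq_bigr _ (fun A _ => F A)) exchange_big /=; apply: eq_bigr => b _.
rewrite -big_distrl /= mulrCA; congr (_ * _).
have -> : \sum_(A : {set pos sq}) (((A \subset Pm m) && (#|A| == b :> nat))%:R : R) =
   #|[set A : {set pos sq} | A \subset Pm m & #|A| == b]|%:R.
  rewrite -sum1_card natr_sum [RHS]big_mkcond /=.
  by apply: eq_bigr => A _; rewrite inE; case: ifP.
by rewrite cards_draws mulrC.
Qed.


Lemma keyfactor (R : realType) l m (x t : R) : (0 < CJ sq)%N -> 0 <= t -> 2 * t <= 1 ->
  x = l%:R * t / (expR 1 * (CJ sq)%:R) ->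
  \sum_(A : {set pos sq}) (adm l m A)%:R * x ^+ #|A| <= 1 + t ^+ l.
Proof.
move=> hC t0 t1 hx; rewrite key2 lerD2l.
apply: le_trans _ (geom l #|{: pos sq}|.+1 t0 t1); apply: ler_sum => b _.
case: (ltnP l b) => h; last by rewrite !mul0r.
rewrite !mul1r; exact: binom_bound (cardPm m) hC (ltnW h) t0 hx.
Qed.

End Comb.

Local Open Scope ring_scope.

Theorem lemma5p16 (R : realType) (M J : finType) (sq : J -> seq M)
  (c : R) (L l s : nat) :
  (32 <= #|M|)%N ->
  1 <= c ->
  (#|J|%:R : R) <= powR (#|M|%:R) c ->
  (L%:R : R) <= 2 * powR (#|M|%:R) c ->
  150 * c * ln (#|M|%:R) / ln (ln (#|M|%:R)) <= (l%:R : R) ->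
  ((num_bad_patterns sq L l s)%:R : R) <=
    2 * expR (#|J|%:R * ln (l%:R) / 8) * (expR 1 * (CJ sq)%:R / l%:R) ^+ s.
Proof.
move=> hM hc hJ hL hl.
set nb := num_bad_patterns sq L l s.
set C := CJ sq.
have he := expR_gt0 (1 : R).
have RHS0 : 0 <= 2 * expR (#|J|%:R * ln (l%:R : R) / 8) * (expR 1 * C%:R / l%:R) ^+ s.
  apply: mulr_ge0; first by apply: mulr_ge0; [lra | exact: expR_ge0].
  apply: exprn_ge0; apply: divr_ge0; last exact: ler0n.
  by apply: mulr_ge0; [exact: ltW | exact: ler0n].
have [nb0|nbpos] := posnP nb; first by rewrite nb0; exact: RHS0.
move: nbpos; rewrite /nb /num_bad_patterns card_gt0 => /set0Pn [B].
rewrite inE => /andP[hbad /eqP hsz].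
have hsJ : (s <= #|J|)%N by rewrite -hsz; exact: bad_size hbad.
have hJs : (#|J| < 2 * s)%N by case/and4P: hbad => _ _ _; rewrite hsz.
have spos : (0 < s)%N by move: hJs; case: (s) => //; rewrite muln0.
have Cpos : (0 < C)%N.
  have hps : (0 < pattern_size B)%N by rewrite hsz.
  have [k hk] : exists k, (0 < #|B k|)%N.
    case: (boolP [exists k, 0 < #|B k|]%N) => [/existsP //|/existsPn hn].
    move: hps; rewrite /pattern_size big1 // => k _; apply/eqP.
    by rewrite -leqn0 leqNgt (negbTE (hn k)).
  move: hk; rewrite card_gt0 => /set0Pn [p hp].
  have /andP[hsub _] := bad_adm hbad k.
  apply: leq_trans (cardPm sq k.2); rewrite card_gt0; apply/set0Pn; exists p.
  exact: (subsetP hsub).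
rewrite -/(num_bad_patterns sq L l s).
have hM' : (32 : R) <= #|M|%:R by rewrite ler_nat.
have [h256 ht1 hK] := analytic hM' hc hl.
set t := expR (- (ln (l%:R : R) / 8)).
have t0 : 0 <= t := expR_ge0 _.
have tpos : 0 < t := expR_gt0 _.
set x := l%:R * t / (expR 1 * C%:R).
have lpos : (0 : R) < l%:R by lra.
have Cpos' : (0 : R) < C%:R by rewrite ltr0n.
have xpos : 0 < x by rewrite /x; apply: divr_gt0; apply: mulr_gt0.
have hfac k : \sum_(A : {set pos sq}) (adm l k.2 A)%:R * x ^+ #|A| <= 1 + t ^+ l.
  exact: keyfactor Cpos t0 ht1 erefl.
have hprod := key1 sq L l s (ltW xpos).
have hprod2 : \prod_(k : 'I_(2 * L) * M)
      \sum_(A : {set pos sq}) (adm l k.2 A)%:R * x ^+ #|A| <= (1 + t ^+ l) ^+ (2 * L * #|M|).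
  apply: le_trans (_ : _ <= \prod_(k : 'I_(2 * L) * M) (1 + t ^+ l)) _; last first.
    by rewrite prodr_const card_prod card_ord.
  apply: ler_prod => k _; rewrite hfac andbT.
  by apply: sumr_ge0 => A _; apply: mulr_ge0; [exact: ler0n | exact: exprn_ge0 (ltW xpos)].
have htl : t ^+ l = expR (l%:R * - (ln (l%:R : R) / 8)) by rewrite expRM_natl.
have hpow : #|M|%:R `^ c = expR (c * ln (#|M|%:R : R)).
  by rewrite /powR (_ : (#|M|%:R == 0 :> R) = false) //; apply/negbTE; lra.
have hKt : (2 * L * #|M|)%:R * t ^+ l <= 1 / 2.
  rewrite !natrM htl; move: hK hL; rewrite hpow.
  have := expR_ge0 (l%:R * - (ln (l%:R : R) / 8)).
  set E := expR (l%:R * _); set P := expR (c * _) => E0 hK hL.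
  have : 0 <= (2 * P - L%:R) * (#|M|%:R * E) by apply: mulr_ge0; [lra | apply: mulr_ge0; [exact: ler0n| lra]].
  nra.
have hexp : (1 + t ^+ l) ^+ (2 * L * #|M|) <= 2.
  apply: le_trans (expR_half R).
  apply: le_trans (_ : expR ((2 * L * #|M|)%:R * t ^+ l) <= _); last by rewrite ler_expR.
  rewrite expRM_natl; apply: lerXn2r; rewrite ?nnegrE ?expR_ge0 ?addr_ge0 ?exprn_ge0 //.
  exact: expR_ge1Dx.
have hnb : (num_bad_patterns sq L l s)%:R * x ^+ s <= 2.
  by apply: le_trans hprod _; apply: le_trans hprod2 hexp.
rewrite -ler_pdivlMr ?exprn_gt0 // -exprVn in hnb.
have hz := expR_gt0 (ln (l%:R : R) / 8).
have hxi : x^-1 = (expR 1 * C%:R / l%:R) * expR (ln (l%:R : R) / 8).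
  rewrite /x /t expRN; field.
  by rewrite (lt0r_neq0 hz) (lt0r_neq0 lpos) (lt0r_neq0 he) (lt0r_neq0 Cpos').
rewrite hxi exprMn -expRM_natl in hnb.
apply: le_trans hnb _.
have hln0 : 0 <= ln (l%:R : R) by apply: ln_ge0; lra.
have hs : (s%:R : R) <= #|J|%:R by rewrite ler_nat.
have : expR (s%:R * (ln (l%:R : R) / 8)) <= expR (#|J|%:R * ln (l%:R : R) / 8).
  by rewrite ler_expR -mulrA; apply: ler_wpM2r => //; lra.
have : 0 <= ((expR 1 : R) * C%:R / l%:R) ^+ s.
  apply: exprn_ge0; apply: divr_ge0; last exact: ler0n.
  by apply: mulr_ge0; [exact: ltW | exact: ler0n].
set a := (expR 1 * C%:R / l%:R) ^+ s.
set e1 := expR (s%:R * _); set e2 := expR (#|J|%:R * _ / 8) => a0 h12.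
have : 0 <= a * (e2 - e1) by apply: mulr_ge0; lra.
nra.
Qed.
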